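(* Let $p$ be a prime and let $n\geq 1$, $k\geq 1$ be integers. For $s\geq k$ and $j\geq 0$ define numbers $M(t_s^{p^j})$ recursively by: $M(t_s^{p^j})=2s-1$ if $k\leq s\leq n+k-1$, and $$M(t_{s}^{p^j})=\max\{2s-1,\ p\,M(t_{s-n}^{p^{j+n-1}})+1\}\quad\text{if } s\geq n+k.$$ Let $s_0=\max\left\{\left[\frac{2pn+p-2}{2(p-1)}\right],\ n+k-1\right\}$, where $[x]$ denotes the integer part of $x$. Then: (1) $M(t_{s}^{p^j})>M(t_{s-1}^{p^j})+1$ (for $s>k$); (2) for $k\leq s\leq s_0$, $M(t_s^{p^j})=2s-1$; (3) for $s>s_0$, $p\,M(t_{s-n}^{p^j})+1\geq 2s-1$ and $M(t_s^{p^j})= p\,M(t_{s-n}^{p^{j}})+1$.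
   Context: The numbers $M(t_s^{p^j})$ are the ''May filtrations'' of the elements $t_s^{p^j}$ of the Hopf algebra $S(n,k)=\mathbb{Z}/p[t_k,t_{k+1},\dots]/(t_s^{p^n}-t_s)$; for this statement only the recursive definition above is needed. *)

(* Defs.v *)
From mathcomp Require Import all_boot.
Set Implicit Arguments. Unset Strict Implicit. Unset Printing Implicit Defensive.

(* May filtration recursion, with explicit fuel (fuel = s suffices when n >= 1).
   Mf p n k fuel s j  models  M(t_s^{p^j}) for s >= k. *)
Fixpoint Mf (p n k fuel s j : nat) : nat :=
  match fuel with
  | 0 => 0
  | fuel'.+1 =>
      if s <= n + k - 1 then 2 * s - 1
      else maxn (2 * s - 1) (p * Mf p n k fuel' (s - n) (j + n - 1) + 1)
  end.

Definition M (p n k s j : nat) : nat := Mf p n k s s j.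

Definition s0 (p n k : nat) : nat :=
  maxn ((2 * p * n + p - 2) %/ (2 * (p - 1))) (n + k - 1).

(* Main.v *)
Require Import Defs.
From mathcomp Require Import all_boot.
From mathcomp Require Import zify.

Section S.
Variables (p n k : nat).
Hypothesis hn : 1 <= n.
Hypothesis hk : 1 <= k.

Lemma Mf_j f s j j' : Mf p n k f s j = Mf p n k f s j'.
Proof. elim: f s j j' => [|f IH] s j j' /=; first by []. by rewrite (IH _ (j + n - 1) 0) (IH _ (j' + n - 1) 0). Qed.

Lemma Mf_fuel f g s j : s <= f -> s <= g -> Mf p n k f s j = Mf p n k g s j.
Proof.
elim: f g s j => [|f IH] [|g] s j /=.
- by [].
- move=> Hs _; have -> : s = 0 by lia. by rewrite leq0n.
- move=> _ Hs; have -> : s = 0 by lia. by rewrite leq0n.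
- move=> H1 H2; case: ifP => // Hs.
  by rewrite (IH g); lia.
Qed.

Lemma M_j s j : M p n k s j = M p n k s 0.
Proof. exact: Mf_j. Qed.

Lemma M_base s j : s <= n + k - 1 -> M p n k s j = 2 * s - 1.
Proof. rewrite /M; case: s => [|s] /= H; first by []. by rewrite H. Qed.

Lemma M_rec s j : n + k <= s ->
  M p n k s j = maxn (2 * s - 1) (p * M p n k (s - n) 0 + 1).
Proof.
rewrite /M; case: s => [|s] H /=; first lia.
have -> : (s.+1 <= n + k - 1) = false by lia.
rewrite (Mf_j _ _ _ 0) (Mf_fuel s (s.+1 - n)) //; lia.
Qed.

Lemma M_ge s j : 2 * s - 1 <= M p n k s j.
Proof.
case: (leqP s (n + k - 1)) => H.
- by rewrite M_base.
- rewrite M_rec; [apply: leq_maxl | lia].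
Qed.

Lemma M_incr s : 0 < p -> k < s -> M p n k (s - 1) 0 + 2 <= M p n k s 0.
Proof.
move=> hp0; elim: s {-2}s (leqnn s) => [|N IH] s Hs Hks; first lia.
case: (leqP s (n + k - 1)) => H.
- rewrite (M_base s) ?(M_base (s - 1)); lia.
case: (leqP (s - 1) (n + k - 1)) => H1.
- rewrite (M_rec s); last lia. rewrite (M_base (s - 1)) //.
  have := leq_maxl (2 * s - 1) (p * M p n k (s - n) 0 + 1). lia.
- rewrite (M_rec s) ?(M_rec (s - 1)); try lia.
  have E : s - 1 - n = (s - n) - 1 by lia.
  rewrite E.
  have Hi := IH (s - n) ltac:(lia) ltac:(lia).
  set a := M p n k (s - n - 1) 0 in Hi *.
  set b := M p n k (s - n) 0 in Hi *.
  have : p * a + 2 <= p * b.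
  { case: p hp0 => [|q] //= _.
    apply: leq_trans (leq_mul (leqnn q.+1) Hi). rewrite mulnDr. lia. }
  lia.
Qed.

End S.

Theorem lemma2p4 (p n k : nat) (hp : prime p) (hn : 1 <= n) (hk : 1 <= k) :
  (forall s j, k < s -> M p n k s j > M p n k (s - 1) j + 1) /\
  (forall s j, k <= s <= s0 p n k -> M p n k s j = 2 * s - 1) /\
  (forall s j, s0 p n k < s ->
     p * M p n k (s - n) j + 1 >= 2 * s - 1 /\
     M p n k s j = p * M p n k (s - n) j + 1).
Proof.
have p2 := prime_gt1 hp.
have dpos : 0 < 2 * (p - 1) by lia.
split; [|split].
- move=> s j Hs. rewrite (M_j _ _ _ s) (M_j _ _ _ (s - 1)).
  have := @M_incr p n k hn hk s ltac:(lia) Hs. lia.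
- move=> s j /andP [Hks]; rewrite /s0 leq_max.
  case: (leqP s (n + k - 1)) => H0; first by rewrite M_base.
  move=> Hd0.
  have Hd : s <= (2 * p * n + p - 2) %/ (2 * (p - 1)).
  { case/orP: Hd0 => // ?; lia. }
  clear Hd0 H0.
  elim: s {-2}s (leqnn s) j Hks Hd => [|N IH] s Hs j Hks Hd.
  + rewrite M_base //; lia.
  case: (leqP s (n + k - 1)) => H; first by rewrite M_base.
  rewrite M_rec //; last lia.
  have Hd' : s - n <= (2 * p * n + p - 2) %/ (2 * (p - 1)).
  { apply: leq_trans Hd; lia. }
  rewrite (IH (s - n) ltac:(lia) 0 ltac:(lia) Hd').
  rewrite leq_divRL // in Hd.
  apply/maxn_idPl. nia.
- move=> s j; rewrite /s0 gtn_max => /andP [Hd H].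
  rewrite ltn_divLR // in Hd.
  have Hm := @M_ge p n k hn hk (s - n) j.
  have Hge : 2 * s - 1 <= p * M p n k (s - n) j + 1.
  { apply: leq_trans (_ : p * (2 * (s - n) - 1) + 1 <= _).
    + nia.
    + by rewrite leq_add2r leq_mul2l Hm orbT. }
  split => //.
  rewrite M_rec //; last lia.
  rewrite (M_j _ _ _ (s - n) j) in Hge *. by apply/maxn_idPr.
Qed.
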